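(* Assume the Schanuel conjecture. Let $b\in\overline{\mathbb{Q}}\setminus\{0,1\}$ with a fixed logarithm $\ln b$, and let $a_1,\dots,a_m$ be a ladder with respect to $b$ such that $1,a_1,\dots,a_m$ are linearly independent over $\mathbb{Q}$. Then for each $k=1,\dots,m$ exactly one of $a_k,\,b^{a_k}$ is transcendental over $F_{k-1}$; denoting it $b_k$, the numbers $\ln b,b_1,\dots,b_m$ are algebraically independent over $\mathbb{Q}$. In particular $\ln b\notin\overline{F_m}$.
   Context: Schanuel conjecture: if $z_1,\dots,z_n\in\mathbb{C}$ are linearly independent over $\mathbb{Q}$, then the field $\mathbb{Q}(z_1,\dots,z_n,e^{z_1},\dots,e^{z_n})$ has transcendence degree at least $n$ over $\mathbb{Q}$ (at least $n$ of these $2n$ numbers are algebraically independent over $\mathbb{Q}$). $b^x:=e^{x\ln b}$ for the fixed nonzero value $\ln b$. $\overline{F}$ denotes the algebraic closure in $\mathbb{C}$ of a field $F$. Ladder: for $a_1,\dots,a_m\in\mathbb{C}$ put $F_0:=\mathbb{Q}$ and $F_k:=\mathbb{Q}(a_1,\dots,a_k,b^{a_1},\dots,b^{a_k})$; the sequence is a ladder if for every $1\le k\le m$, $a_k\in\overline{F_{k-1}}$ or $b^{a_k}\in\overline{F_{k-1}}$. *)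

(* Defs.v *)
From HB Require Import structures.
From mathcomp Require Import all_boot all_order all_algebra.
From mathcomp Require Import reals sequences exp trigo.
From mathcomp Require Import complex.
From mathcomp Require Import mpoly.

Set Implicit Arguments.
Unset Strict Implicit.
Unset Printing Implicit Defensive.
Import Order.TTheory GRing.Theory Num.Theory.
Local Open Scope ring_scope.

Section Defs.
Variable R : realType.
Local Notation C := R[i].

Definition cexp (z : C) : C :=
  let: Complex x y := z in Complex (expR x * cos y) (expR x * sin y).

(* b^x := exp(x ln b) for the fixed logarithm lnb *)
Definition cpow (lnb x : C) : C := cexp (x * lnb).

Definition qeval (n : nat) (v : 'I_n -> C) (p : mpoly.mpoly n rat) : C :=
  mpoly.mmap (fun c : rat => ratr c) v p.

Definition alg_indep (n : nat) (x : 'I_n -> C) : Prop :=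
  forall p : mpoly.mpoly n rat, qeval x p = 0 -> p = 0.

Definition Qlin_indep (n : nat) (z : 'I_n -> C) : Prop :=
  forall c : 'I_n -> rat, \sum_(i < n) ratr (c i) * z i = 0 -> forall i, c i = 0.

(* Schanuel's conjecture (as stated in the context): among the 2n numbers
   z_1..z_n, e^z_1..e^z_n there are n algebraically independent ones. *)
Definition Schanuel : Prop :=
  forall (n : nat) (z : 'I_n -> C), Qlin_indep z ->
    exists f : 'I_n -> 'I_(n + n), injective f /\
      alg_indep (fun i => (fun j : 'I_(n + n) =>
          match split j with inl k => z k | inr k => cexp (z k) end) (f i)).

Definition gen_field (s : seq C) : C -> Prop :=
  fun x => exists p q : mpoly.mpoly (size s) rat,
    qeval (fun i => tnth (in_tuple s) i) q != 0 /\
    x = qeval (fun i => tnth (in_tuple s) i) p / qeval (fun i => tnth (in_tuple s) i) q.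

Definition algebraic_over (F : C -> Prop) (x : C) : Prop :=
  exists p : {poly C}, p != 0 /\ (forall i, F p`_i) /\ root p x.

Definition algebraicQ (x : C) : Prop :=
  exists p : {poly rat}, p != 0 /\ root (map_poly (fun c : rat => ratr c) p) x.

(* the ladder fields F_k = Q(a_1..a_k, b^a_1..b^a_k), for a : 'I_m -> C
   (0-based: F k uses the first k entries a_0..a_(k-1)) *)
Definition ladderF (m : nat) (lnb : C) (a : 'I_m -> C) (k : nat) : C -> Prop :=
  let s := [seq a i | i <- [seq j <- enum 'I_m | (nat_of_ord j < k)%N]] in
  gen_field (s ++ [seq cpow lnb x | x <- s]).

Definition ladder (m : nat) (lnb : C) (a : 'I_m -> C) : Prop :=
  forall k : 'I_m, algebraic_over (ladderF lnb a k) (a k) \/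
                   algebraic_over (ladderF lnb a k) (cpow lnb (a k)).

End Defs.

(* Main.v *)
Require Import Defs.
From HB Require Import structures.
From mathcomp Require Import all_boot all_order all_algebra.
From mathcomp Require Import reals sequences exp trigo.
From mathcomp Require Import complex.
From mathcomp Require Import mpoly.
From mathcomp Require Import boolp.
From mathcomp Require Import ring.
From mathcomp Require Import zify.
Import Order.TTheory GRing.Theory Num.Theory.
Local Open Scope ring_scope.

Set Implicit Arguments.
Unset Strict Implicit.
Unset Printing Implicit Defensive.

Section SubF.
Variable F : fieldType.
Record closedP (S : F -> Prop) : Prop := ClosedP {
  cl1 : S 1;
  clB : forall a b, S a -> S b -> S (a - b);
  clM : forall a b, S a -> S b -> S (a * b);
  clV : forall a, S a -> S a^-1 }.

Variables (S : F -> Prop) (hS : closedP S).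
Definition Sb (h : closedP S) : {pred F} := fun z => `[< S z >].
Lemma SbE z : (z \in Sb hS) = `[< S z >]. Proof. by []. Qed.
Lemma Sb_divring : divring_closed (Sb hS).
Proof.
split; rewrite /Sb.
- by apply/asboolP; apply: cl1.
- by move=> a b /asboolP ha /asboolP hb; apply/asboolP; apply: clB.
- move=> a b /asboolP ha /asboolP hb; apply/asboolP.
  by apply: clM => //; apply: clV.
Qed.
HB.instance Definition _ := GRing.isDivringClosed.Build F (Sb hS) Sb_divring.
Record SF := MkSF { sfval :> F; sfvalP : sfval \in Sb hS }.
HB.instance Definition _ := [isSub for sfval].
HB.instance Definition _ := [Choice of SF by <:].
HB.instance Definition _ := [SubChoice_isSubIntegralDomain of SF by <:].
HB.instance Definition _ := [SubIntegralDomain_isSubField of SF by <:].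
Definition sfv : {rmorphism SF -> F} := GRing.RMorphism.clone _ _ (val : SF -> F) _.

Lemma inSb z : S z -> z \in Sb hS. Proof. by move=> h; apply/asboolP. Qed.
Lemma Sb_in z : z \in Sb hS -> S z. Proof. by move/asboolP. Qed.

Lemma cl0 : S 0. Proof. by rewrite -(subrr 1); apply: clB => //; apply: cl1. Qed.
Lemma clN a : S a -> S (- a).
Proof. by move=> h; rewrite -sub0r; apply: clB => //; apply: cl0. Qed.
Lemma clD a b : S a -> S b -> S (a + b).
Proof. by move=> ha hb; rewrite -[b]opprK; apply: clB => //; apply: clN. Qed.
Lemma clDiv a b : S a -> S b -> S (a / b).
Proof. by move=> ha hb; apply: clM => //; apply: clV. Qed.

Lemma sfv_img z : S z -> exists k : SF, z = sfv k.
Proof. by move=> h; exists (MkSF (inSb h)). Qed.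
Lemma sfv_in (k : SF) : S (sfv k).
Proof. by apply: Sb_in; case: k. Qed.

Lemma poly_img (p : {poly F}) : (forall i, S p`_i) ->
  exists q : {poly SF}, p = map_poly sfv q.
Proof.
move=> hp; exists (\poly_(i < size p) (insubd (MkSF (inSb (@cl0))) p`_i)).
apply/polyP => i; rewrite coef_map coef_poly /=.
case: (ltnP i (size p)) => hi /=.
  by rewrite val_insubd inSb.
by rewrite nth_default // raddf0.
Qed.
End SubF.
Arguments cl0 {F S}.

Section Main.
Variable R : realType.
Local Notation C := R[i].

Lemma qevalM n (v : 'I_n -> C) p q : qeval v (p * q) = qeval v p * qeval v q.
Proof. rewrite /qeval; exact: rmorphM. Qed.
Lemma qevalB n (v : 'I_n -> C) p q : qeval v (p - q) = qeval v p - qeval v q.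
Proof. rewrite /qeval; exact: rmorphB. Qed.
Lemma qevalD n (v : 'I_n -> C) p q : qeval v (p + q) = qeval v p + qeval v q.
Proof. rewrite /qeval; exact: rmorphD. Qed.
Lemma qeval1 n (v : 'I_n -> C) : qeval v 1 = 1.
Proof. rewrite /qeval; exact: rmorph1. Qed.
Lemma qeval0 n (v : 'I_n -> C) : qeval v 0 = 0.
Proof. rewrite /qeval; exact: rmorph0. Qed.
Lemma qevalXU n (v : 'I_n -> C) i : qeval v 'X_i = v i.
Proof. rewrite /qeval mmapX mmap1U //. Qed.
Lemma qevalC n (v : 'I_n -> C) c : qeval v c%:MP = ratr c.
Proof. by rewrite /qeval mmapC. Qed.
Lemma qevalE n (v : 'I_n -> C) p :
  qeval v p = \sum_(m <- msupp p) ratr p@_m * \prod_(i < n) v i ^+ m i.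
Proof. by []. Qed.

Lemma qeval_in (S : C -> Prop) (hS : closedP S) n (v : 'I_n -> C) p :
  (forall i, S (v i)) -> S (qeval v p).
Proof.
move=> hv; apply: (@Sb_in _ _ hS); rewrite qevalE; apply: rpred_sum => m _.
apply: rpredM; first exact: rpred_rat.
by apply: rpred_prod => i _; apply: rpredX; apply: inSb.
Qed.

Lemma rat_in (S : C -> Prop) (hS : closedP S) c : S (ratr c).
Proof. by apply: (@Sb_in _ _ hS); apply: rpred_rat. Qed.

Lemma gen_field_min (S : C -> Prop) (hS : closedP S) (s : seq C) :
  (forall c, c \in s -> S c) -> forall z, gen_field s z -> S z.
Proof.
move=> hs z [p [q [hq ->]]]; apply: (clDiv hS); apply: qeval_in => // i;
  by apply: hs; rewrite (tnth_nth 0) mem_nth.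
Qed.

Record subringP (A : C -> Prop) : Prop := SubringP {
  sr1 : A 1;
  srB : forall a b, A a -> A b -> A (a - b);
  srM : forall a b, A a -> A b -> A (a * b) }.

Definition Rat (A : C -> Prop) : C -> Prop :=
  fun z => exists a b, A a /\ A b /\ b != 0 /\ z = a / b.

Lemma sr0 A : subringP A -> A 0.
Proof. by move=> h; rewrite -(subrr 1); apply: srB => //; apply: sr1. Qed.

Lemma Rat_sub A : subringP A -> forall a, A a -> Rat A a.
Proof.
move=> h a ha; exists a, (1 : C); split => //; split; first exact: sr1.
by rewrite oner_neq0 divr1.
Qed.

Lemma Rat_closed A : subringP A -> closedP (Rat A).
Proof.
move=> hA; have A0 := sr0 hA.
have AN a : A a -> A (- a) by move=> h; rewrite -sub0r; apply: (srB hA).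
split.
- by apply: Rat_sub => //; apply: (sr1 hA).
- move=> _ _ [a [b [ha [hb [b0 ->]]]]] [c [d [hc [hd [d0 ->]]]]].
  exists (a * d - c * b), (b * d); split; first by apply: (srB hA); apply: (srM hA).
  split; first exact: (srM hA).
  split; first by rewrite mulf_neq0.
  by field; apply/andP.
- move=> _ _ [a [b [ha [hb [b0 ->]]]]] [c [d [hc [hd [d0 ->]]]]].
  exists (a * c), (b * d); split; first exact: (srM hA).
  split; first exact: (srM hA).
  split; first by rewrite mulf_neq0.
  by field; apply/andP.
- move=> _ [a [b [ha [hb [b0 ->]]]]].
  have [->|a0] := eqVneq a 0.
    exists 0, 1; split => //; split; first exact: (sr1 hA).
    by rewrite oner_neq0 mul0r invr0 mul0r.
  by exists b, a; do !split => //; rewrite invf_div.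
Qed.

Definition Alg (s : seq C) : C -> Prop := algebraic_over (gen_field s).

Lemma gen_fieldE (s : seq C) z : gen_field s z <->
  Rat (fun a => exists p, a = qeval (fun i => tnth (in_tuple s) i) p) z.
Proof.
split.
- move=> [p [q [hq ->]]]; exists (qeval (fun i => tnth (in_tuple s) i) p),
    (qeval (fun i => tnth (in_tuple s) i) q).
  by do !split => //; [exists p|exists q].
- by move=> [_ [_ [[p ->] [[q ->] [hq ->]]]]]; exists p, q.
Qed.

Lemma gen_field_closed (s : seq C) : closedP (gen_field s).
Proof.
have h := Rat_closed (A := fun a => exists p, a = qeval (fun i => tnth (in_tuple s) i) p).
case: h.
- split; first by exists 1; rewrite qeval1.
  + by move=> _ _ [p ->] [q ->]; exists (p - q); rewrite qevalB.
  + by move=> _ _ [p ->] [q ->]; exists (p * q); rewrite qevalM.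
- move=> h1 hB hM hV; split.
  + by apply/gen_fieldE.
  + by move=> a b /gen_fieldE ha /gen_fieldE hb; apply/gen_fieldE; apply: hB.
  + by move=> a b /gen_fieldE ha /gen_fieldE hb; apply/gen_fieldE; apply: hM.
  + by move=> a /gen_fieldE ha; apply/gen_fieldE; apply: hV.
Qed.

Lemma gen_field_mem (s : seq C) c : c \in s -> gen_field s c.
Proof.
move=> cs; have hi : (index c s < size s)%N by rewrite index_mem.
exists 'X_(Ordinal hi), 1; rewrite qeval1 oner_neq0 divr1 qevalXU /=.
by rewrite (tnth_nth 0) /= nth_index.
Qed.

Lemma gen_field_rat (s : seq C) c : gen_field s (ratr c).
Proof. exact: (rat_in (gen_field_closed s)). Qed.

End Main.

Section B.
Variable R : realType.
Local Notation C := R[i].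

Lemma alg_equiv (S : C -> Prop) (hS : closedP S) z :
  algebraic_over S z <-> algebraicOver (sfv hS) z.
Proof.
split.
- move=> [p [p0 [hp rz]]]; have [q eq] := poly_img hS hp.
  exists q; last by rewrite -eq.
  by apply: contraNneq p0 => q0; rewrite eq q0 rmorph0.
- move=> [q q0 rz]; exists (map_poly (sfv hS) q); split; first by rewrite map_poly_eq0.
  split => // i; rewrite coef_map; exact: sfv_in.
Qed.

Lemma alg_closed (S : C -> Prop) (hS : closedP S) : closedP (algebraic_over S).
Proof.
split.
- by apply/(alg_equiv hS); apply: algebraic1.
- by move=> a b /(alg_equiv hS) ha /(alg_equiv hS) hb; apply/(alg_equiv hS); apply: algebraic_sub.
- by move=> a b /(alg_equiv hS) ha /(alg_equiv hS) hb; apply/(alg_equiv hS); apply: algebraic_mul.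
- by move=> a /(alg_equiv hS) ha; apply/(alg_equiv hS); apply: algebraic_inv.
Qed.

Lemma alg_base (S : C -> Prop) (hS : closedP S) z : S z -> algebraic_over S z.
Proof.
move=> h; have [k ->] := sfv_img hS h; apply/(alg_equiv hS); exact: algebraic_id.
Qed.

Lemma alg_trans (S : C -> Prop) (hS : closedP S) (p : {poly C}) z :
  p != 0 -> (forall i, algebraic_over S p`_i) -> root p z -> algebraic_over S z.
Proof.
move=> p0 hp rz; apply/(alg_equiv hS)/integral_algebraic.
apply: (integral_root p0 rz) => w /(nthP 0) [i _ <-].
by apply/integral_algebraic/(alg_equiv hS).
Qed.

Lemma Alg_closed (s : seq C) : closedP (Alg s).
Proof. exact: alg_closed (gen_field_closed s). Qed.

Lemma Alg_gen (s : seq C) z : gen_field s z -> Alg s z.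
Proof. exact: alg_base (gen_field_closed s) z. Qed.

Lemma Alg_mem (s : seq C) z : z \in s -> Alg s z.
Proof. by move=> h; apply: Alg_gen; apply: gen_field_mem. Qed.

Lemma Alg_rat (s : seq C) c : Alg s (ratr c).
Proof. by apply: Alg_gen; apply: gen_field_rat. Qed.

Lemma alg_mono (S : C -> Prop) (t : seq C) :
  (forall z, S z -> Alg t z) -> forall z, algebraic_over S z -> Alg t z.
Proof.
move=> hST z [p [p0 [hp rz]]]; apply: (alg_trans (gen_field_closed t) p0) => // i.
exact: hST.
Qed.

Lemma Alg_mono (s t : seq C) :
  (forall c, c \in s -> Alg t c) -> forall z, Alg s z -> Alg t z.
Proof.
move=> h; apply: alg_mono; apply: gen_field_min => //; exact: Alg_closed.
Qed.

Lemma Alg_sub (s t : seq C) : {subset s <= t} -> forall z, Alg s z -> Alg t z.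
Proof. by move=> st; apply: Alg_mono => c /st; apply: Alg_mem. Qed.

End B.

Section Ex.
Variable R : realType.
Local Notation C := R[i].

Lemma horner_in (S : C -> Prop) (hS : closedP S) (q : {poly C}) w :
  (forall i, S q`_i) -> S w -> S q.[w].
Proof.
move=> hq hw; apply: (@Sb_in _ _ hS); apply: rpred_horner; last exact: inSb.
by apply/polyOverP => i; apply: inSb.
Qed.

Lemma gen_field_cat (v t : seq C) z : gen_field v z -> gen_field (v ++ t) z.
Proof.
apply: gen_field_min; first exact: gen_field_closed.
by move=> c cv; apply: gen_field_mem; rewrite mem_cat cv.
Qed.

Lemma exchange (v : seq C) x y :
  Alg (v ++ [:: x]) y -> ~ Alg v y -> Alg (v ++ [:: y]) x.
Proof.
move=> [p [p0 [hp ry]]] nAy.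
pose hT := gen_field_closed v.
pose K := SF hT.
pose io := sfv hT.
pose Ex (h : {poly K}) := (map_poly io h).[x].
have ExB f g : Ex (f - g) = Ex f - Ex g by rewrite /Ex rmorphB hornerD hornerN.
have ExM f g : Ex (f * g) = Ex f * Ex g by rewrite /Ex rmorphM hornerM.
have Ex1 : Ex 1 = 1 by rewrite /Ex rmorph1 hornerC.
have ExC k : Ex k%:P = io k by rewrite /Ex map_polyC hornerC.
have ExP (I : Type) (r : seq I) (Pr : pred I) (F : I -> {poly K}) :
    Ex (\prod_(i <- r | Pr i) F i) = \prod_(i <- r | Pr i) Ex (F i).
  by rewrite /Ex rmorph_prod /= horner_prod.
have stepa : forall w, gen_field (v ++ [:: x]) w ->
    exists fg : {poly K} * {poly K}, Ex fg.2 != 0 /\ w = Ex fg.1 / Ex fg.2.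
  move=> w hw.
  have hA : subringP (fun a => exists f, a = Ex f).
    split.
    - by exists 1; rewrite Ex1.
    - by move=> _ _ [f ->] [g ->]; exists (f - g); rewrite ExB.
    - by move=> _ _ [f ->] [g ->]; exists (f * g); rewrite ExM.
  have := gen_field_min (Rat_closed hA) _ hw.
  case.
  - move=> c; rewrite mem_cat => /orP [cv|].
    + have [k ->] := sfv_img hT (gen_field_mem cv).
      by apply: Rat_sub => //; exists k%:P; rewrite ExC.
    + rewrite inE => /eqP ->; apply: Rat_sub => //; exists 'X.
      by rewrite /Ex map_polyX hornerX.
  - move=> _ [_ [[f ->] [[g ->] [g0 ->]]]].
    by exists (f, g).
have [FG hFG] := @choice nat ({poly K} * {poly K}) (fun i (fg : {poly K} * {poly K}) =>
   Ex fg.2 != 0 /\ p`_i = Ex fg.1 / Ex fg.2) (fun i => stepa _ (hp i)).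
pose N := size p.
pose G := \prod_(i < N) (FG i).2.
pose h (i : 'I_N) := (FG i).1 * \prod_(j < N | j != i) (FG j).2.
have G0 : Ex G != 0.
  by rewrite /G ExP; apply/prodf_neq0 => i _; case: (hFG i).
have hh (i : 'I_N) : Ex (h i) = Ex G * p`_i.
  rewrite /h /G ExM !ExP [in RHS](bigD1 i) //=; case: (hFG i) => g0 ->.
  by field.
pose P : {poly {poly K}} := \poly_(i < N) (if insub i is Some j then h j else 0).
pose U : {poly {poly C}} := map_poly (map_poly io) P.
have f1 : map_poly (horner_eval x) U = Ex G *: p.
  apply/polyP => i; rewrite coef_map coefZ /U coef_map /= coef_poly.
  case: (ltnP i N) => hi.
    rewrite insubT /=; have := hh (Sub i hi); rewrite /Ex /= => <-.
    by rewrite horner_evalE.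
  by rewrite map_poly0 horner_evalE horner0 nth_default // mulr0.
have U0 : U != 0.
  apply: contraNneq p0 => U0; move: f1; rewrite U0 rmorph0 => /esym/eqP.
  by rewrite scaler_eq0 (negbTE G0) /= => /eqP ->.
pose W := map_poly (horner_eval y) (swapXY U).
have Wx : root W x.
  rewrite /root /W -horner_polyC -horner2_swapXY horner_swapXY f1.
  by rewrite hornerZ (rootP ry) mulr0.
have WE j : W`_j = (map_poly io (swapXY P)`_j).[y].
  by rewrite /W coef_map /U swapXY_map coef_map.
have [W0|W0] := eqVneq W 0; last first.
  exists W; split => //; split => // j; rewrite WE; apply: horner_in.
  - exact: gen_field_closed.
  - move=> i; rewrite coef_map /=; apply: gen_field_cat; exact: sfv_in.
  - by apply: gen_field_mem; rewrite mem_cat inE eqxx orbT.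
exfalso; apply: (negP U0); apply/eqP.
suff: swapXY P = 0 by rewrite /U => /eqP; rewrite swapXY_eq0 => /eqP ->; rewrite rmorph0.
apply/polyP => j; rewrite coef0.
have : (map_poly io (swapXY P)`_j).[y] = 0 by rewrite -WE W0 coef0.
have [->//|q0] := eqVneq (swapXY P)`_j 0.
move=> rq; exfalso; apply: nAy.
exists (map_poly io (swapXY P)`_j); split; first by rewrite map_poly_eq0.
split; last exact/rootP.
by move=> i; rewrite coef_map; exact: sfv_in.
Qed.

End Ex.

Section D.
Variable R : realType.
Local Notation C := R[i].

Lemma exch_find (y : C) (X : seq C) : forall u : seq C,
  Alg (u ++ X) y -> ~ Alg u y ->
  exists X1 x X2, X = X1 ++ x :: X2 /\ Alg ((u ++ X1) ++ [:: x]) y /\ ~ Alg (u ++ X1) y.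
Proof.
elim: X => [|x X IH] u.
  by rewrite cats0 => h nh; exfalso; apply: nh.
move=> h nh.
have [hx|hx] := EM (Alg (u ++ [:: x]) y).
  by exists [::], x, X; rewrite !cats0.
have h' : Alg ((u ++ [:: x]) ++ X) y by rewrite -catA.
have [X1 [x' [X2 [eX [h1 h2]]]]] := IH (u ++ [:: x]) h' hx.
exists (x :: X1), x', X2; split; first by rewrite eX.
by rewrite -[u ++ x :: X1]/(u ++ [:: x] ++ X1) catA.
Qed.

Lemma core_seq (n : nat) : forall (u X ys : seq C), size X = n -> size ys = n.+1 ->
  (forall i, (i < n.+1)%N -> ~ Alg (u ++ take i ys) (nth 0 ys i)) ->
  (forall y, y \in ys -> Alg (u ++ X) y) -> False.
Proof.
elim: n => [|n IH] u X ys sX sys hind hall.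
  have eX : X = [::] by apply: size0nil.
  case: ys sys hind hall => [//|y0 [|//]] _ hind hall.
  apply: (hind 0%N) => //=; have := hall y0 (mem_head _ _); by rewrite eX.
case: ys sys hind hall => [//|y0 ys] /= [sys] hind hall.
have h0 : ~ Alg u y0 by have := hind 0%N isT; rewrite /= cats0.
have [X1 [x [X2 [eX [h1 h2]]]]] := exch_find (hall y0 (mem_head _ _)) h0.
have hx := exchange h1 h2.
apply: (IH (u ++ [:: y0]) (X1 ++ X2) ys) => //.
- by move: sX; rewrite eX size_cat /= size_cat addnS => -[].
- by move=> i hi; rewrite -catA /=; apply: (hind i.+1).
- move=> y yys; apply: (@Alg_mono _ (u ++ X)); last by apply: hall; rewrite inE yys orbT.
  move=> c; rewrite eX !mem_cat inE => /orP [cu|/orP [cX1|/orP [/eqP ->|cX2]]].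
  + by apply: Alg_mem; rewrite !mem_cat cu.
  + by apply: Alg_mem; rewrite !mem_cat cX1 !orbT.
  + apply: (Alg_sub _ hx) => w; rewrite !mem_cat !inE.
    by case/orP => [/orP [] ->|->]; rewrite ?orbT.
  + by apply: Alg_mem; rewrite !mem_cat cX2 !orbT.
Qed.
End D.

Section E.
Variable R : realType.
Local Notation C := R[i].

Local Notation widen := (widen_ord (leqnSn _)).
Definition mtl n (m : 'X_{1..n.+1}) : 'X_{1..n} := [multinom m (widen i) | i < n].

Lemma mnm_split n (m1 m2 : 'X_{1..n.+1}) :
  mtl m1 = mtl m2 -> m1 ord_max = m2 ord_max -> m1 = m2.
Proof.
move=> /mnmP e1 e2; apply/mnmP => i.
have [j ->|->] := unliftP ord_max i; last exact: e2.
have := e1 j; rewrite !mnmE.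
suff -> : lift ord_max j = widen j by [].
by apply: val_inj; rewrite /= /bump leqNgt ltn_ord.
Qed.

Lemma muni_coef n (p : {mpoly rat[n.+1]}) (m : 'X_{1..n.+1}) :
  ((muni p)`_(m ord_max))@_(mtl m) = p@_m.
Proof.
rewrite muniE coef_sum raddf_sum /=.
rewrite (eq_bigr (fun m0 => p@_m0 * ((m0 == m)%:R))); last first.
  move=> m0 _; rewrite coefZ coefXn.
  have [e|ne] := eqVneq m0 m.
    by rewrite e eqxx mulr1 mcoeffZ mcoeffX /mtl eqxx mulr1.
  case: eqP => h; last by rewrite mulr0 mcoeff0 mulr0.
  rewrite mulr1 mcoeffZ mcoeffX; case: eqP => h2; last by rewrite !mulr0.
  by exfalso; move/eqP: ne; apply; apply: mnm_split => //; rewrite h.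
have [mp|mp] := boolP (m \in msupp p).
  rewrite (bigD1_seq m) ?msupp_uniq //= eqxx mulr1 big1 ?addr0 //.
  by move=> m0 /negbTE ->; rewrite mulr0.
rewrite big1_seq ?(memN_msupp_eq0 mp) // => m0 /andP[_ m0p].
by have [e|] := eqVneq m0 m; [rewrite -e m0p in mp | move=> _; rewrite mulr0].
Qed.

Lemma muni_eq0 n (p : {mpoly rat[n.+1]}) : muni p = 0 -> p = 0.
Proof.
move=> h; apply/mpolyP => m; rewrite -muni_coef h coef0 mcoeff0.
by rewrite mcoeff0.
Qed.

Lemma qeval_muni n (w : 'I_n.+1 -> C) P :
  qeval w P = (map_poly (qeval (fun j => w (widen j))) (muni P)).[w ord_max].
Proof.
rewrite muniE qevalE rmorph_sum horner_sum /=; apply: eq_bigr => m _.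
rewrite map_polyZ /= map_polyXn hornerZ hornerXn.
rewrite /qeval mmapZ mmapX /mmap1 big_ord_recr /= mulrA; congr (_ * _ * _).
by apply: eq_bigr => i _; rewrite mnmE.
Qed.

End E.

Section F.
Variable R : realType.
Local Notation C := R[i].
Local Notation widen := (widen_ord (leqnSn _)).

Definition lst n (w : 'I_n -> C) : seq C := map w (enum 'I_n).

Lemma size_lst n (w : 'I_n -> C) : size (lst w) = n.
Proof. by rewrite size_map size_enum_ord. Qed.

Lemma nth_lst n (w : 'I_n -> C) (i : 'I_n) : nth 0 (lst w) i = w i.
Proof. by rewrite (nth_map i) ?size_enum_ord // nth_ord_enum. Qed.

Lemma mem_lst n (w : 'I_n -> C) (i : 'I_n) : w i \in lst w.
Proof. by apply: map_f; rewrite mem_enum. Qed.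

Lemma lst_rcons n (w : 'I_n.+1 -> C) :
  lst w = rcons (lst (fun j => w (widen j))) (w ord_max).
Proof.
apply: (@eq_from_nth _ 0); first by rewrite size_rcons !size_lst.
move=> k; rewrite size_lst => hk.
have -> : nth 0 (lst w) k = w (Ordinal hk) by exact: (nth_lst w (Ordinal hk)).
rewrite nth_rcons size_lst; case: ltnP => h.
  have -> : nth 0 (lst (fun j => w (widen j))) k = w (widen (Ordinal h)).
    by exact: (nth_lst (fun j => w (widen j)) (Ordinal h)).
  congr w; exact: val_inj.
have e : k = n by apply/eqP; rewrite eqn_leq h -ltnS hk.
rewrite (_ : (k == n) = true); last by apply/eqP.
by congr w; apply: val_inj.
Qed.

Lemma take_lst n (w : 'I_n.+1 -> C) (i : nat) : (i <= n)%N ->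
  take i (lst w) = take i (lst (fun j => w (widen j))).
Proof.
move=> hi; rewrite lst_rcons -cats1 take_cat size_lst.
case: ltnP => // h; have -> : i = n by apply/eqP; rewrite eqn_leq hi h.
by rewrite subnn take0 cats0 take_oversize // size_lst.
Qed.

Lemma mpoly0_const (P : {mpoly rat[0]}) : P = (P@_0%MM)%:MP.
Proof.
apply/mpolyP => m; rewrite mcoeffC.
have -> : m = 0%MM by apply/mnmP => -[].
by rewrite eqxx mulr1.
Qed.

Lemma dep_alg N : forall (w : 'I_N -> C) P, P != 0 -> qeval w P = 0 ->
  exists i : 'I_N, Alg (take i (lst w)) (w i).
Proof.
elim: N => [|N IH] w P P0 hP.
  exfalso; move: P0 hP; rewrite [P]mpoly0_const qevalC => /eqP P0 /eqP.
  by rewrite fmorph_eq0 => /eqP h; apply: P0; rewrite h.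
pose w' := fun j : 'I_N => w (widen j).
have q0 : muni P != 0 by apply: contra_neq P0; apply: muni_eq0.
have [r0|r0] := eqVneq (map_poly (qeval w') (muni P)) 0.
  have := coef_map (qeval w') (muni P) (size (muni P)).-1.
  rewrite r0 coef0 => /esym hl.
  have l0 : lead_coef (muni P) != 0 by rewrite lead_coef_eq0.
  have [i hi] := IH w' _ l0 hl.
  exists (widen i); rewrite take_lst; first exact: hi.
  by apply: ltnW; exact: (ltn_ord i).
exists ord_max; rewrite take_lst // take_oversize ?size_lst //.
exists (map_poly (qeval w') (muni P)); split => //; split.
  move=> k; rewrite coef_map; apply: qeval_in; first exact: gen_field_closed.
  by move=> j; apply: gen_field_mem; apply: mem_lst.
by apply/rootP; rewrite -qeval_muni.
Qed.
Lemma exists_nonroot (p : {poly C}) : p != 0 -> exists t, p.[t] != 0.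
Proof.
move=> p0; case: (EM (exists t, p.[t] != 0)) => // h; exfalso.
have allr t : root p t by apply/negPn/negP => ht; apply: h; exists t.
suff : false by [].
have := max_poly_roots p0 (rs := [seq k%:R | k <- iota 0 (size p)]).
rewrite size_map size_iota ltnn; apply.
  by apply/allP => ? _; apply: allr.
rewrite map_inj_uniq ?iota_uniq // => a b /eqP; by rewrite eqr_nat => /eqP.
Qed.

Lemma qeval_sum n (v : 'I_n -> C) (I : Type) (r : seq I) (P : pred I) F :
  qeval v (\sum_(i <- r | P i) F i) = \sum_(i <- r | P i) qeval v (F i).
Proof. rewrite /qeval; exact: rmorph_sum. Qed.
Lemma qeval_prod n (v : 'I_n -> C) (I : Type) (r : seq I) (P : pred I) F :
  qeval v (\prod_(i <- r | P i) F i) = \prod_(i <- r | P i) qeval v (F i).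
Proof. rewrite /qeval; exact: rmorph_prod. Qed.
Lemma qevalXn n (v : 'I_n -> C) p k : qeval v (p ^+ k) = qeval v p ^+ k.
Proof. rewrite /qeval; exact: rmorphXn. Qed.

Lemma qeval_emb N k (w : 'I_N -> C) (sg : 'I_k -> 'I_N) q :
  qeval w (mmap (@mpolyC _ _) (fun j => 'X_(sg j)) q) = qeval (fun j => w (sg j)) q.
Proof.
have -> : mmap (@mpolyC _ _) (fun j => 'X_(sg j)) q =
  \sum_(m <- msupp q) (q@_m)%:MP * \prod_(j < k) 'X_(sg j) ^+ m j by [].
rewrite qeval_sum qevalE; apply: eq_bigr => m _.
rewrite qevalM qevalC qeval_prod; congr (_ * _); apply: eq_bigr => j _.
by rewrite qevalXn qevalXU.
Qed.

Lemma indep_seq N (w : 'I_N -> C) : alg_indep w ->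
  forall i : 'I_N, ~ Alg (take i (lst w)) (w i).
Proof.
move=> hind i [p [p0 [hp rw]]].
set s := take i (lst w).
have ss : size s = i by rewrite /s size_take size_lst ltn_ord.
have hsN : (size s <= N)%N by rewrite ss ltnW.
pose sg (j : 'I_(size s)) : 'I_N := widen_ord hsN j.
pose vs := fun j : 'I_(size s) => tnth (in_tuple s) j.
have vsE j : vs j = w (sg j).
  have hj : (j < i)%N := leq_trans (ltn_ord j) (eq_leq ss).
  rewrite /vs (tnth_nth 0) /= /s nth_take //.
  exact: (nth_lst w (sg j)).
have [AB hAB] := @choice nat ({mpoly rat[size s]} * {mpoly rat[size s]})
  (fun l ab => qeval vs ab.2 != 0 /\ p`_l = qeval vs ab.1 / qeval vs ab.2)
  (fun l => match hp l with ex_intro a (ex_intro b (conj h1 h2)) =>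
     ex_intro _ (a, b) (conj h1 h2) end).
pose M := size p.
pose Bm := \prod_(l < M) (AB l).2.
pose r (l : 'I_M) := (AB l).1 * \prod_(l' < M | l' != l) (AB l').2.
pose emb (q : {mpoly rat[size s]}) : {mpoly rat[N]} := mmap (@mpolyC N rat) (fun j => 'X_(sg j)) q.
pose Pt := \sum_(l < M) emb (r l) * 'X_i ^+ l.
have B0 : qeval vs Bm != 0.
  by rewrite /Bm qeval_prod; apply/prodf_neq0 => l _; case: (hAB l).
have hr l : qeval vs (r l) = qeval vs Bm * p`_l.
  rewrite /r /Bm qevalM !qeval_prod [in RHS](bigD1 l) //=.
  case: (hAB l) => b0 ->; by field.
have hPt (w2 : 'I_N -> C) : (forall j, w2 (sg j) = w (sg j)) ->
    qeval w2 Pt = qeval vs Bm * p.[w2 i].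
  move=> e; rewrite /Pt qeval_sum horner_coef mulr_sumr.
  apply: eq_bigr => l _; rewrite qevalM qevalXn qevalXU.
  rewrite qeval_emb (_ : (fun j => w2 (sg j)) = vs); first by rewrite hr mulrA.
  by apply: funext => j; rewrite e vsE.
have Pt0 : Pt = 0 by apply: hind; rewrite hPt // (rootP rw) mulr0.
have [t ht] := exists_nonroot p0.
pose w2 := fun j => if j == i then t else w j.
have := hPt w2; rewrite Pt0 qeval0 /w2 eqxx => h.
have : 0 = qeval vs Bm * p.[t].
  apply: h => j; case: eqP => // e; exfalso.
  by have := leq_trans (ltn_ord j) (eq_leq ss); rewrite -e /= ltnn.
by move/esym/eqP; rewrite mulf_eq0 (negbTE B0) (negbTE ht).
Qed.

End F.

Section G.
Variable R : realType.
Local Notation C := R[i].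
Variables (HS : Schanuel R) (b lnb : C) (hbalg : algebraicQ b) (hb0 : b != 0) (hb1 : b != 1)
  (hlnb : cexp lnb = b) (m : nat) (a : 'I_m -> C) (hlad : ladder lnb a)
  (hindep : forall (c0 : rat) (c : 'I_m -> rat),
      ratr c0 + \sum_(i < m) ratr (c i) * a i = 0 ->
      c0 = 0 /\ forall i, c i = 0).

Lemma lnb0 : lnb != 0.
Proof.
apply: contra_neq hb1 => e; rewrite -hlnb e /cexp /=.
by rewrite expR0 cos0 sin0 !mul1r.
Qed.

Definition zz (j : 'I_m.+1) : C := if unlift ord0 j is Some k then a k * lnb else lnb.

Lemma zz_indep : Qlin_indep zz.
Proof.
move=> c hc.
have h : (ratr (c ord0) + \sum_(k < m) ratr (c (lift ord0 k)) * a k) * lnb = 0.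
  rewrite -[RHS]hc big_ord_recl /zz unlift_none mulrDl big_distrl; congr (_ + _).
  by apply: eq_bigr => k _; rewrite liftK mulrA.
move: h => /eqP; rewrite mulf_eq0 (negbTE lnb0) orbF => /eqP /hindep [h0 hk] j.
by have [k ->|->] := unliftP ord0 j.
Qed.

Lemma b_alg X : Alg X b.
Proof.
move: hbalg => [p [p0 rb]]; exists (map_poly (fun c : rat => ratr c) p).
split; first by rewrite map_poly_eq0.
by split => // i; rewrite coef_map; apply: gen_field_rat.
Qed.

Lemma key_contra (X : seq C) : size X = m -> Alg X lnb ->
  (forall k, Alg X (a k)) -> (forall k, Alg X (cpow lnb (a k))) -> False.
Proof.
move=> sX hl ha hc.
have [f [_ hy]] := HS zz_indep.
set y := fun i => _ in hy.
have hzz k : Alg X (zz k).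
  rewrite /zz; case: unlift => [k'|//]; apply: (clM (Alg_closed X)) => //.
have hyX i : Alg X (y i).
  rewrite /y; case: split => k; first exact: hzz.
  rewrite /zz; case: unlift => [k'|]; last by rewrite hlnb; apply: b_alg.
  exact: hc.
have hs := indep_seq hy.
apply: (@core_seq _ m [::] X (lst y)) => //; first by rewrite size_lst.
  move=> i hi; rewrite cat0s; have := hs (Ordinal hi).
  by rewrite (nth_lst y (Ordinal hi)).
by move=> v /mapP [j _ ->]; apply: hyX.
Qed.

Local Notation ca k := (cpow lnb (a k)).

Definition sk (k : nat) : seq C :=
  let s := [seq a i | i <- [seq j <- enum 'I_m | (nat_of_ord j < k)%N]] in
  s ++ [seq cpow lnb x | x <- s].

Lemma mem_sk k c : c \in sk k ->
  exists j : 'I_m, (j < k)%N /\ (c = a j \/ c = ca j).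
Proof.
rewrite mem_cat => /orP [/mapP [j hj ->] | /mapP [x /mapP [j hj ->] ->]];
  exists j; rewrite mem_filter in hj; case/andP: hj => hj _; split => //; by [left|right].
Qed.

Definition THyp (X : seq C) (k : 'I_m) :=
  (Alg (sk k) (a k) \/ Alg X (a k)) /\ (Alg (sk k) (ca k) \/ Alg X (ca k)).

Lemma tower X : (forall k, THyp X k) -> forall k, Alg X (a k) /\ Alg X (ca k).
Proof.
move=> hT.
suff H : forall n (k : 'I_m), (k < n)%N -> Alg X (a k) /\ Alg X (ca k).
  by move=> k; apply: (H k.+1).
elim=> [//|n IH] k hk.
have hsub z : Alg (sk k) z -> Alg X z.
  apply: Alg_mono => c /mem_sk [j [hj [->|->]]].
  + by case: (IH j (leq_trans hj hk)).
  + by case: (IH j (leq_trans hj hk)).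
case: (hT k) => [[h1|h1] [h2|h2]]; split => //; by apply: hsub.
Qed.

Definition cpick (k : 'I_m) : C := if `[< Alg (sk k) (a k) >] then ca k else a k.

Lemma cpick_hyp X k : Alg X (cpick k) -> THyp X k.
Proof.
rewrite /cpick; case: asboolP => h hX.
  by split; [left | right].
case: (hlad k) => // h2.
by split; [right | left].
Qed.

Lemma lnb_notin : ~ algebraic_over (ladderF lnb a m) lnb.
Proof.
move=> hl.
pose X := lst cpick.
have hT := tower (fun k => cpick_hyp (Alg_mem (mem_lst cpick k))).
apply: (@key_contra X); rewrite ?size_lst //; last first.
- by move=> k; case: (hT k).
- by move=> k; case: (hT k).
apply: (Alg_mono _ hl) => c /mem_sk [j [_ [->|->]]]; by case: (hT j).
Qed.

Definition Xrem (x : C) (f : 'I_m -> C) (k : 'I_m) := x :: [seq f j | j <- rem k (enum 'I_m)].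

Lemma size_Xrem x f k : size (Xrem x f k) = m.
Proof.
rewrite /= size_map size_rem ?mem_enum // size_enum_ord prednK //.
exact: leq_ltn_trans (leq0n k) (ltn_ord k).
Qed.

Lemma mem_Xrem x f k j : j != k -> f j \in Xrem x f k.
Proof.
move=> jk; rewrite inE; apply/orP; right; apply: map_f.
by rewrite (mem_rem_uniq _ (enum_uniq _)) inE jk mem_enum.
Qed.

Lemma part1 (k : 'I_m) : ~ Alg (sk k) (a k) <-> Alg (sk k) (ca k).
Proof.
split; first by case: (hlad k).
move=> hc ha.
pose X := Xrem lnb cpick k.
have hT : forall j, THyp X j.
  move=> j; have [->|jk] := eqVneq j k; first by split; left.
  by apply: cpick_hyp; apply: Alg_mem; apply: mem_Xrem.
have hT2 := tower hT.
apply: (@key_contra X); first exact: size_Xrem.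
- by apply: Alg_mem; rewrite inE eqxx.
- by move=> j; case: (hT2 j).
- by move=> j; case: (hT2 j).
Qed.

Definition ww (bk : 'I_m -> C) (j : 'I_m.+1) : C :=
  if unlift ord0 j is Some k then bk k else lnb.

Lemma mem_take_enum N n (j : 'I_N) : j \in take n (enum 'I_N) -> (j < n)%N.
Proof.
move=> /(nthP j) [t ht e]; rewrite size_take size_enum_ord in ht.
have [htn htN] : (t < n)%N /\ (t < N)%N.
  by move: ht; case: (ltnP n N) => h1 h2; lia.
by rewrite nth_take // in e; rewrite -e nth_enum_ord.
Qed.

Lemma part2 (bk : 'I_m -> C) :
  (forall k : 'I_m, (bk k = a k \/ bk k = ca k) /\ ~ Alg (sk k) (bk k)) ->
  alg_indep (ww bk).
Proof.
move=> hbk.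
have bk_hyp X k : Alg X (bk k) -> THyp X k.
  move=> hX; case: (hbk k) => -[e|e] nt; case: (hlad k) => h.
  - by exfalso; apply: nt; rewrite e.
  - by split; [right; rewrite -e | left].
  - by split; [left | right; rewrite -e].
  - by exfalso; apply: nt; rewrite e.
move=> p hp; case: (EM (p = 0)) => // /eqP p0; exfalso.
have [i hi] := dep_alg p0 hp.
case: (unliftP ord0 i) hi => [k ->|->].
  rewrite /ww liftK => hi.
  pose X := Xrem lnb bk k.
  have hkX : Alg X (bk k).
    apply: (Alg_mono _ hi) => c; rewrite /lst -map_take => /mapP [j hj ->].
    have := mem_take_enum hj; rewrite /ww.
    case: (unliftP ord0 j) => [j' ->|->]; rewrite ?liftK ?unlift_none => hj'.
      apply: Alg_mem; apply: mem_Xrem; apply: contraTneq hj' => ->.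
      by rewrite /= /bump leq0n ltnn.
    by apply: Alg_mem; rewrite inE eqxx.
  have hT : forall j, THyp X j.
    move=> j; have [->|jk] := eqVneq j k; first exact: bk_hyp.
    by apply: bk_hyp; apply: Alg_mem; apply: mem_Xrem.
  have hT2 := tower hT.
  apply: (@key_contra X); first exact: size_Xrem.
  - by apply: Alg_mem; rewrite inE eqxx.
  - by move=> j; case: (hT2 j).
  - by move=> j; case: (hT2 j).
rewrite /ww unlift_none take0 => hi.
pose X := lst bk.
have hT2 := tower (fun k => bk_hyp X k (Alg_mem (mem_lst bk k))).
apply: (@key_contra X); first exact: size_lst.
- by apply: (Alg_sub _ hi).
- by move=> j; case: (hT2 j).
- by move=> j; case: (hT2 j).
Qed.

End G.

Unset Implicit Arguments.
Set Strict Implicit.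
Set Printing Implicit Defensive.

Theorem lemma11p4 (R : realType) (HS : Schanuel R)
  (b lnb : R[i]) (hbalg : algebraicQ b) (hb0 : b != 0) (hb1 : b != 1)
  (hlnb : cexp lnb = b)
  (m : nat) (a : 'I_m -> R[i]) (hlad : ladder lnb a)
  (hindep : forall (c0 : rat) (c : 'I_m -> rat),
      ratr c0 + \sum_(i < m) ratr (c i) * a i = 0 ->
      c0 = 0 /\ forall i, c i = 0) :
  (forall k : 'I_m,
     ~ algebraic_over (ladderF lnb a k) (a k) <->
       algebraic_over (ladderF lnb a k) (cpow lnb (a k))) /\
  (forall bk : 'I_m -> R[i],
     (forall k : 'I_m, (bk k = a k \/ bk k = cpow lnb (a k)) /\
                       ~ algebraic_over (ladderF lnb a k) (bk k)) ->
     alg_indep (fun j : 'I_m.+1 => if unlift ord0 j is Some k then bk k else lnb)) /\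
  ~ algebraic_over (ladderF lnb a m) lnb.
Proof.
split; first exact: (part1 HS hbalg hb1 hlnb hlad hindep).
split; first by move=> bk hbk; exact: (part2 HS hbalg hb0 hb1 hlnb hlad hindep hbk).
exact: (lnb_notin HS hbalg hb1 hlnb hlad hindep).
Qed.
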